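(* Let $K>1$, let $1\le k\le n$, and let $X_1,\ldots,X_n$ be independent non-negative random variables with cdf's $F_1,\ldots,F_n$, each satisfying condition (C) with parameter $K$. Let $q>0$ satisfy $\sum_{i=1}^n F_i(q)\le k-1/2$. Then for every integer $\ell\ge5$, $$\mathbb P\Big\{\operatorname{k\text{-}min}_{1\le i\le n}X_i\le q/K^{\ell}\Big\}\le \frac{4}{2^{\ell/2}}.$$
   Context: For real numbers $a_1,\ldots,a_n$ and $1\le k\le n$, $\operatorname{k\text{-}min}_{i\le n}a_i$ denotes the $k$-th smallest element of the sequence (counted with multiplicity). Condition (C) with parameter $K>1$ for the cdf $F$ of a non-negative random variable: $\frac{F(Kt)}{1-F(Kt)}\ge \frac{2F(t)}{1-F(t)}$ for all $t>0$, with the conventions $1/0=\infty$, $1/\infty=0$. *)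

(* Defs.v *)
From Stdlib Require Import Reals Lra List.
Import ListNotations.
Open Scope R_scope.

Record prob_space := {
  omega :> Type;
  meas : (omega -> Prop) -> Prop;
  Pr : (omega -> Prop) -> R;
  meas_full : meas (fun _ => True);
  meas_compl : forall A, meas A -> meas (fun w => ~ A w);
  meas_cunion : forall A : nat -> omega -> Prop,
      (forall m, meas (A m)) -> meas (fun w => exists m, A m w);
  Pr_nonneg : forall A, meas A -> 0 <= Pr A;
  Pr_full : Pr (fun _ => True) = 1;
  Pr_cadd : forall A : nat -> omega -> Prop,
      (forall m, meas (A m)) ->
      (forall m1 m2 w, m1 <> m2 -> A m1 w -> A m2 w -> False) ->
      infinite_sum (fun m => Pr (A m)) (Pr (fun w => exists m, A m w))
}.

Definition random_variable (Om : prob_space) (X : Om -> R) : Prop :=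
  forall t, meas Om (fun w => X w <= t).

Definition cdf (Om : prob_space) (X : Om -> R) (t : R) : R :=
  Pr Om (fun w => X w <= t).

(* X_0, ..., X_{n-1} are (mutually) independent: the joint cdf of every
   subfamily factorises (events {X_i <= t_i} generate the sigma-algebras). *)
Definition independent (Om : prob_space) (n : nat) (X : nat -> Om -> R) : Prop :=
  forall (S : list nat) (t : nat -> R),
    NoDup S -> (forall i, In i S -> (i < n)%nat) ->
    Pr Om (fun w => forall i, In i S -> X i w <= t i)
    = fold_right Rmult 1 (map (fun i => Pr Om (fun w => X i w <= t i)) S).

(* Condition (C) with parameter K, with conventions 1/0 = oo, 1/oo = 0:
   F(Kt)/(1-F(Kt)) >= 2F(t)/(1-F(t)) for all t > 0. The LHS is oo iff
   F(Kt) = 1, the RHS is oo iff F(t) = 1. *)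
Definition condC (F : R -> R) (K : R) : Prop :=
  forall t, 0 < t ->
    F (K * t) = 1 \/
    (F t <> 1 /\ F (K * t) / (1 - F (K * t)) >= 2 * F t / (1 - F t)).

Definition count_idx (n : nat) (p : nat -> bool) : nat :=
  length (filter p (seq 0 n)).

(* v is the k-th smallest element (counted with multiplicity) of a_0..a_{n-1} *)
Definition is_kmin (a : nat -> R) (n k : nat) (v : R) : Prop :=
  (exists i, (i < n)%nat /\ a i = v) /\
  (count_idx n (fun i => if Rlt_dec (a i) v then true else false) < k)%nat /\
  (k <= count_idx n (fun i => if Rle_dec (a i) v then true else false))%nat.

Definition rsum (n : nat) (f : nat -> R) : R :=
  fold_right Rplus 0 (map f (seq 0 n)).

(* Main.v *)
Require Import Defs.
From Stdlib Require Import Reals Lra Lia List Permutation FunctionalExtensionality PropExtensionality Classical.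
Open Scope R_scope.

Lemma set_ext (Om : prob_space) (A B : Om -> Prop) :
  (forall w, A w <-> B w) -> A = B.
Proof. intros H; apply functional_extensionality; intros w; apply propositional_extensionality; auto. Qed.

Lemma Pr_ext (Om : prob_space) (A B : Om -> Prop) :
  (forall w, A w <-> B w) -> Pr Om A = Pr Om B.
Proof. intros H; rewrite (set_ext Om A B H); reflexivity. Qed.

Lemma meas_ext (Om : prob_space) (A B : Om -> Prop) :
  (forall w, A w <-> B w) -> meas Om A -> meas Om B.
Proof. intros H; rewrite (set_ext Om A B H); auto. Qed.

Lemma meas_empty (Om : prob_space) : meas Om (fun _ => False).
Proof. apply (meas_ext Om (fun w => ~ True)). tauto. apply meas_compl, meas_full. Qed.

Lemma sum_const e n : sum_f_R0 (fun _ => e) n = INR (S n) * e.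
Proof. induction n. simpl; ring. rewrite tech5, IHn, (S_INR (S n)); ring. Qed.

Lemma Pr_empty (Om : prob_space) : Pr Om (fun _ => False) = 0.
Proof.
  pose proof (Pr_cadd Om (fun (_ : nat) (_ : Om) => False) (fun _ => meas_empty Om)) as H.
  assert (Hd : forall (m1 m2 : nat) (w : Om), m1 <> m2 -> False -> False -> False) by tauto.
  specialize (H Hd). cbv beta in H.
  rewrite (Pr_ext Om (fun w => exists m : nat, False) (fun _ => False)) in H
    by (intros; split; [intros [_ []]| tauto]).
  set (e := Pr Om (fun _ => False)) in *.
  destruct (Req_dec e 0) as [|Hne]; auto.
  assert (He : Rabs e / 4 > 0) by (pose proof (Rabs_pos_lt e Hne); lra).
  destruct (H _ He) as [N HN].
  pose proof (HN N (le_n _)) as H1. pose proof (HN (S N) (le_S _ _ (le_n _))) as H2.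
  unfold Rdist in *; rewrite !sum_const in *.
  rewrite (S_INR (S N)) in H2. rewrite S_INR in *.
  exfalso.
  replace ((INR N + 1 + 1) * e - e) with (e + ((INR N + 1) * e - e)) in H2 by ring.
  set (z := (INR N + 1) * e - e) in *.
  pose proof (Rabs_triang (e + z) (- z)) as H0.
  replace (e + z + - z) with e in H0 by ring. rewrite Rabs_Ropp in H0.
  lra.
Qed.

Lemma Pr_add2 (Om : prob_space) (A B : Om -> Prop) :
  meas Om A -> meas Om B -> (forall w, A w -> B w -> False) ->
  Pr Om (fun w => A w \/ B w) = Pr Om A + Pr Om B.
Proof.
  intros HA HB Hd.
  set (F := fun m : nat => match m with 0%nat => A | 1%nat => B | _ => fun _ : Om => False end).
  assert (HF : forall m, meas Om (F m)).
  { intros [|[|m]]; simpl; auto using meas_empty. }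
  assert (HFd : forall m1 m2 w, m1 <> m2 -> F m1 w -> F m2 w -> False).
  { intros [|[|m1]] [|[|m2]] w Hne; simpl; try tauto; try (exfalso; lia); eauto. }
  pose proof (Pr_cadd Om F HF HFd) as H.
  rewrite (Pr_ext Om (fun w => exists m, F m w) (fun w => A w \/ B w)) in H.
  2:{ intros w; split. intros [[|[|m]] Hm]; simpl in Hm; tauto.
      intros [H1|H1]; [exists 0%nat|exists 1%nat]; exact H1. }
  apply (uniqueness_sum _ _ _ H).
  intros eps Heps; exists 1%nat; intros n Hn.
  assert (sum_f_R0 (fun m => Pr Om (F m)) n = Pr Om A + Pr Om B) as ->.
  { destruct n as [|n]; [lia|]. clear Hn. induction n. simpl. ring.
    rewrite tech5, IHn. simpl. rewrite Pr_empty. ring. }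
  unfold Rdist; rewrite Rminus_diag, Rabs_R0; lra.
Qed.

Lemma meas_or (Om : prob_space) (A B : Om -> Prop) :
  meas Om A -> meas Om B -> meas Om (fun w => A w \/ B w).
Proof.
  intros HA HB.
  set (F := fun m : nat => match m with 0%nat => A | 1%nat => B | _ => fun _ : Om => False end).
  apply (meas_ext Om (fun w => exists m, F m w)).
  { intros w; split. intros [[|[|m]] Hm]; simpl in Hm; tauto.
      intros [H1|H1]; [exists 0%nat|exists 1%nat]; exact H1. }
  apply meas_cunion. intros [|[|m]]; simpl; auto using meas_empty.
Qed.

Lemma meas_and (Om : prob_space) (A B : Om -> Prop) :
  meas Om A -> meas Om B -> meas Om (fun w => A w /\ B w).
Proof.
  intros HA HB. apply (meas_ext Om (fun w => ~ (~ A w \/ ~ B w))).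
  { intros w; tauto. }
  apply meas_compl, meas_or; apply meas_compl; auto.
Qed.

Lemma Pr_split (Om : prob_space) (A B : Om -> Prop) :
  meas Om A -> meas Om B ->
  Pr Om (fun w => A w /\ B w) + Pr Om (fun w => A w /\ ~ B w) = Pr Om A.
Proof.
  intros HA HB. rewrite <- Pr_add2.
  - apply Pr_ext; intros w; tauto.
  - apply meas_and; auto.
  - apply meas_and; auto using meas_compl.
  - tauto.
Qed.

Lemma Pr_le1 (Om : prob_space) (A : Om -> Prop) : meas Om A -> Pr Om A <= 1.
Proof.
  intros HA. pose proof (Pr_split Om (fun _ => True) A (meas_full Om) HA).
  rewrite Pr_full in H.
  rewrite (Pr_ext Om (fun w => True /\ A w) A) in H by tauto.
  assert (0 <= Pr Om (fun w => True /\ ~ A w)).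
  apply Pr_nonneg, meas_and; auto using meas_full, meas_compl. lra.
Qed.

Definition cyl (Om : prob_space) (X : nat -> Om -> R) (t : R) (S T : list nat) (w : Om) : Prop :=
  (forall i, In i S -> X i w <= t) /\ (forall i, In i T -> ~ X i w <= t).

Definition prodl (f : nat -> R) (L : list nat) : R := fold_right Rmult 1 (map f L).

Lemma meas_forall_list (Om : prob_space) (P : nat -> Om -> Prop) (L : list nat) :
  (forall i, In i L -> meas Om (P i)) -> meas Om (fun w => forall i, In i L -> P i w).
Proof.
  induction L as [|a L IH]; intros H.
  - apply (meas_ext Om (fun _ => True)). intros w; simpl; split; tauto. apply meas_full.
  - apply (meas_ext Om (fun w => P a w /\ forall i, In i L -> P i w)).
    { intros w; simpl; split. intros [H1 H2] i [->|Hi]; auto. intros H1; split; auto. }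
    apply meas_and. apply H; simpl; auto. apply IH; intros; apply H; simpl; auto.
Qed.

Lemma meas_cyl Om n X t S T :
  (forall i, (i < n)%nat -> random_variable Om (X i)) ->
  (forall i, In i (S ++ T) -> (i < n)%nat) -> meas Om (cyl Om X t S T).
Proof.
  intros HX HI. apply meas_and; apply meas_forall_list; intros i Hi.
  - apply HX, HI, in_or_app; auto.
  - apply meas_compl, HX, HI, in_or_app; auto.
Qed.

Lemma cyl_prob Om n X t :
  (forall i, (i < n)%nat -> random_variable Om (X i)) ->
  independent Om n X ->
  forall T S, NoDup (S ++ T) -> (forall i, In i (S ++ T) -> (i < n)%nat) ->
  Pr Om (cyl Om X t S T) =
    prodl (fun i => cdf Om (X i) t) S * prodl (fun i => 1 - cdf Om (X i) t) T.
Proof.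
  intros HX Hind. induction T as [|j T IH]; intros S HN HI.
  - rewrite app_nil_r in *. unfold prodl; simpl. rewrite Rmult_1_r.
    rewrite (Pr_ext Om _ (fun w => forall i, In i S -> X i w <= (fun _ => t) i)).
    2:{ intros w; unfold cyl; simpl; tauto. }
    rewrite (Hind S (fun _ => t) HN HI). reflexivity.
  - assert (HN1 : NoDup (S ++ T)) by (eapply NoDup_remove_1; eauto).
    assert (Hj : ~ In j (S ++ T)) by (eapply NoDup_remove_2; eauto).
    assert (HN2 : NoDup ((j :: S) ++ T)).
    { simpl. constructor; auto. }
    assert (HI1 : forall i, In i (S ++ T) -> (i < n)%nat).
    { intros i Hi; apply HI. apply in_app_or in Hi; apply in_or_app; simpl; tauto. }
    assert (HI2 : forall i, In i ((j :: S) ++ T) -> (i < n)%nat).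
    { intros i Hi; apply HI. simpl in Hi. destruct Hi as [<-|Hi]. apply in_or_app; simpl; auto.
      apply in_app_or in Hi; apply in_or_app; simpl; tauto. }
    assert (Hjn : (j < n)%nat) by (apply HI; apply in_or_app; simpl; auto).
    pose proof (Pr_split Om (cyl Om X t S T) (fun w => X j w <= t)
                  (meas_cyl Om n X t S T HX HI1) (HX j Hjn t)) as Hs. cbv beta in Hs.
    rewrite (Pr_ext Om (fun w => cyl Om X t S T w /\ X j w <= t) (cyl Om X t (j :: S) T)) in Hs.
    2:{ intros w; unfold cyl; simpl; split.
        intros [[H1 H2] H3]; split; auto. intros i [<-|Hi]; auto.
        intros [H1 H2]; split; auto. }
    rewrite (Pr_ext Om (fun w => cyl Om X t S T w /\ ~ X j w <= t) (cyl Om X t S (j :: T))) in Hs.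
    2:{ intros w; unfold cyl; simpl; split.
        intros [[H1 H2] H3]; split; auto. intros i [<-|Hi]; auto.
        intros [H1 H2]; split; auto. }
    rewrite (IH _ HN2 HI2), (IH _ HN1 HI1) in Hs.
    unfold prodl in *; simpl in *. lra.
Qed.

Fixpoint cnt (Om : prob_space) (X : nat -> Om -> R) (t : R) (m : nat) (w : Om) : nat :=
  match m with
  | O => O
  | S m' => (cnt Om X t m' w + if Rle_dec (X m' w) t then 1 else 0)%nat
  end.

Fixpoint Pim (f : nat -> R) (m : nat) : R :=
  match m with O => 1 | S m' => Pim f m' * f m' end.

Lemma meas_cnt Om n X t :
  (forall i, (i < n)%nat -> random_variable Om (X i)) ->
  forall m, (m <= n)%nat -> forall j, meas Om (fun w => (j <= cnt Om X t m w)%nat).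
Proof.
  intros HX. induction m as [|m IH]; intros Hm j.
  - destruct j.
    + apply (meas_ext Om (fun _ => True)). intros; simpl; split; auto; lia. apply meas_full.
    + apply (meas_ext Om (fun _ => False)). intros; simpl; split; [tauto|lia]. apply meas_empty.
  - apply (meas_ext Om (fun w => (X m w <= t /\ (j - 1 <= cnt Om X t m w)%nat) \/
                                 (~ X m w <= t /\ (j <= cnt Om X t m w)%nat))).
    + intros w; simpl. destruct (Rle_dec (X m w) t) as [r|r]; split.
      * intros [[_ Hc]|[Hc _]]; [lia|tauto].
      * intros Hc; left; split; auto; lia.
      * intros [[Hc _]|[_ Hc]]; [tauto|lia].
      * intros Hc; right; split; auto; lia.
    + apply meas_or; apply meas_and; try apply meas_compl; try apply HX; try lia; apply IH; lia.
Qed.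

Lemma Pim_ge1 (f : nat -> R) m : (forall i, (i < m)%nat -> 1 <= f i) -> 1 <= Pim f m.
Proof.
  induction m; intros H; simpl. lra.
  assert (1 <= Pim f m) by (apply IHm; intros; apply H; lia).
  assert (1 <= f m) by (apply H; lia). nra.
Qed.

Lemma main_bound Om n X t lam :
  (forall i, (i < n)%nat -> random_variable Om (X i)) ->
  independent Om n X -> 1 <= lam ->
  forall m, (m <= n)%nat -> forall j Sl Tl, NoDup (Sl ++ Tl) ->
  (forall i, In i (Sl ++ Tl) -> (m <= i < n)%nat) ->
  Pr Om (fun w => cyl Om X t Sl Tl w /\ (j <= cnt Om X t m w)%nat) <=
  Pr Om (cyl Om X t Sl Tl) * Pim (fun i => 1 - cdf Om (X i) t + lam * cdf Om (X i) t) m / lam ^ j.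
Proof.
  intros HX Hind Hlam.
  set (f := fun i => 1 - cdf Om (X i) t + lam * cdf Om (X i) t).
  assert (Hp : forall i, (i < n)%nat -> 0 <= cdf Om (X i) t <= 1).
  { intros i Hi; unfold cdf; split; [apply Pr_nonneg| apply Pr_le1]; apply HX; auto. }
  assert (Hf : forall i, (i < n)%nat -> 1 <= f i).
  { intros i Hi; unfold f; specialize (Hp i Hi); nra. }
  assert (HJ0 : forall m Sl Tl, (m <= n)%nat -> (forall i, In i (Sl ++ Tl) -> (i < n)%nat) ->
            Pr Om (fun w => cyl Om X t Sl Tl w /\ (0 <= cnt Om X t m w)%nat) <=
            Pr Om (cyl Om X t Sl Tl) * Pim f m / lam ^ 0).
  { intros m Sl Tl Hm HI. rewrite (Pr_ext Om _ (cyl Om X t Sl Tl)) by (intros; split; [tauto|split; auto; lia]).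
    simpl. assert (1 <= Pim f m) by (apply Pim_ge1; intros; apply Hf; lia).
    assert (0 <= Pr Om (cyl Om X t Sl Tl)) by (apply Pr_nonneg, (meas_cyl Om n); auto).
    rewrite Rdiv_1_r. nra. }
  induction m as [|m IH]; intros Hm j Sl Tl HN HI.
  - destruct j. apply HJ0; auto. intros i Hi; specialize (HI i Hi); lia.
    rewrite (Pr_ext Om _ (fun _ => False)) by (intros; simpl; split; [lia|tauto]).
    rewrite Pr_empty. simpl.
    assert (0 <= Pr Om (cyl Om X t Sl Tl)).
    { apply Pr_nonneg, (meas_cyl Om n); auto. intros i Hi; specialize (HI i Hi); lia. }
    assert (0 < lam * lam ^ j) by (apply Rmult_lt_0_compat; [lra| apply pow_lt; lra]).
    apply Rmult_le_pos; [lra| apply Rlt_le, Rinv_0_lt_compat; auto].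
  - assert (HIn : forall i, In i (Sl ++ Tl) -> (i < n)%nat) by (intros i Hi; specialize (HI i Hi); lia).
    destruct j as [|j]. apply HJ0; auto.
    assert (Hmn : (m < n)%nat) by lia.
    assert (Hm1 : ~ In m (Sl ++ Tl)) by (intros Hi; specialize (HI m Hi); lia).
    assert (HN1 : NoDup ((m :: Sl) ++ Tl)) by (simpl; constructor; auto).
    assert (HN2 : NoDup (Sl ++ m :: Tl)).
    { apply (Permutation_NoDup (Permutation_middle Sl Tl m)). simpl; constructor; auto. }
    assert (HI1 : forall i, In i ((m :: Sl) ++ Tl) -> (m <= i < n)%nat).
    { intros i Hi; simpl in Hi; destruct Hi as [<-|Hi]; [lia|]. specialize (HI i Hi); lia. }
    assert (HI2 : forall i, In i (Sl ++ m :: Tl) -> (m <= i < n)%nat).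
    { intros i Hi. apply in_app_or in Hi. simpl in Hi. destruct Hi as [Hi|[<-|Hi]]; [| lia |].
      - assert (Hi' : In i (Sl ++ Tl)) by (apply in_or_app; auto). specialize (HI i Hi'); lia.
      - assert (Hi' : In i (Sl ++ Tl)) by (apply in_or_app; auto). specialize (HI i Hi'); lia. }
    assert (HIn1 : forall i, In i ((m :: Sl) ++ Tl) -> (i < n)%nat) by (intros i Hi; specialize (HI1 i Hi); lia).
    assert (HIn2 : forall i, In i (Sl ++ m :: Tl) -> (i < n)%nat) by (intros i Hi; specialize (HI2 i Hi); lia).
    rewrite (Pr_ext Om _ (fun w => (cyl Om X t (m :: Sl) Tl w /\ (j <= cnt Om X t m w)%nat) \/
                                   (cyl Om X t Sl (m :: Tl) w /\ (Nat.succ j <= cnt Om X t m w)%nat))).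
    2:{ intros w; unfold cyl, Nat.succ; simpl. destruct (Rle_dec (X m w) t) as [r|r]; split.
        - intros [[H1 H2] H3]; left; split; [split|]; auto; [intros i [<-|Hi]; auto|lia].
        - intros [[[H1 H2] H3]|[[H1 H2] H3]]. split; [split|]; auto; lia.
          exfalso; apply (H2 m); auto.
        - intros [[H1 H2] H3]; right; split; [split|]. exact H1. intros i [<-|Hi]; auto. rewrite Nat.add_0_r in H3; exact H3.
        - intros [[[H1 H2] H3]|[[H1 H2] H3]]. exfalso; apply r, H1; auto.
          split; [split|]; auto. lia. }
    rewrite Pr_add2.
    2:{ apply meas_and. apply (meas_cyl Om n); auto. apply (meas_cnt Om n); auto; lia. }
    2:{ apply meas_and. apply (meas_cyl Om n); auto. apply (meas_cnt Om n); auto; lia. }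
    2:{ intros w [[H1 _] _] [[_ H2] _]. apply (H2 m); simpl; auto; apply H1; simpl; auto. }
    pose proof (IH ltac:(lia) j _ _ HN1 HI1) as E1.
    pose proof (IH ltac:(lia) (Nat.succ j) _ _ HN2 HI2) as E2.
    rewrite (cyl_prob Om n X t HX Hind Tl (m :: Sl) HN1 HIn1) in E1.
    rewrite (cyl_prob Om n X t HX Hind (m :: Tl) Sl HN2 HIn2) in E2.
    rewrite (cyl_prob Om n X t HX Hind Tl Sl HN HIn).
    fold f in E1, E2. simpl Pim. simpl pow in *. unfold prodl in *; simpl in *. fold (prodl (fun i => cdf Om (X i) t) Sl) in *.
    fold (prodl (fun i => 1 - cdf Om (X i) t) Tl) in *.
    set (a := prodl (fun i => cdf Om (X i) t) Sl) in *.
    set (b := prodl (fun i => 1 - cdf Om (X i) t) Tl) in *.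
    set (p := cdf Om (X m) t) in *.
    set (P := Pim f m) in *.
    assert (Hpos : 0 < lam ^ j) by (apply pow_lt; lra).
    assert (Hfm : f m = 1 - p + lam * p) by reflexivity.
    assert (Heq : a * b * (P * f m) / (lam * lam ^ j) =
                  p * a * b * P / lam ^ j + a * ((1 - p) * b) * P / (lam * lam ^ j)).
    { rewrite Hfm. field. split; lra. }
    rewrite Heq. lra.
Qed.

Lemma count_idx_S m p : count_idx (S m) p = (count_idx m p + if p m then 1 else 0)%nat.
Proof.
  unfold count_idx. rewrite seq_S, filter_app, length_app. simpl. destruct (p m); simpl; lia.
Qed.

Lemma cnt_count Om X t m w :
  cnt Om X t m w = count_idx m (fun i => if Rle_dec (X i w) t then true else false).
Proof.
  induction m; simpl. reflexivity. rewrite count_idx_S, IHm.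
  destruct (Rle_dec (X m w) t); reflexivity.
Qed.

Lemma filter_len_mono (p p' : nat -> bool) L :
  (forall i, In i L -> p i = true -> p' i = true) ->
  (length (filter p L) <= length (filter p' L))%nat.
Proof.
  induction L as [|a L IH]; intros H; simpl. lia.
  assert (IH' := IH (fun i Hi => H i (or_intror Hi))).
  specialize (H a (or_introl eq_refl)).
  destruct (p a), (p' a); simpl; try lia; discriminate (H eq_refl).
Qed.

Lemma count_mono n (p p' : nat -> bool) :
  (forall i, (i < n)%nat -> p i = true -> p' i = true) ->
  (count_idx n p <= count_idx n p')%nat.
Proof.
  intros H; apply filter_len_mono. intros i Hi; apply in_seq in Hi. apply H; lia.
Qed.

Lemma count_pos n p : (0 < count_idx n p)%nat -> filter p (seq 0 n) <> nil.
Proof. unfold count_idx; intros H E; rewrite E in H; simpl in H; lia. Qed.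

Lemma list_min (a : nat -> R) L : L <> nil -> exists i, In i L /\ forall j, In j L -> a i <= a j.
Proof.
  induction L as [|x L IH]; intros H. congruence.
  destruct L as [|y L'].
  - exists x; split; simpl; auto. intros j [<-|[]]; lra.
  - destruct IH as [i [Hi Hm]]. discriminate.
    destruct (Rle_dec (a x) (a i)).
    + exists x; split; simpl; auto. intros j [<-|Hj]. lra. specialize (Hm j Hj); lra.
    + exists i; split; simpl; auto. intros j [<-|Hj]. lra. auto.
Qed.

Lemma list_max (a : nat -> R) L : L <> nil -> exists i, In i L /\ forall j, In j L -> a j <= a i.
Proof.
  intros H. destruct (list_min (fun i => - a i) L H) as [i [Hi Hm]].
  exists i; split; auto. intros j Hj; specialize (Hm j Hj); lra.
Qed.

Definition cle (a : nat -> R) n v := count_idx n (fun i => if Rle_dec (a i) v then true else false).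

Lemma kmin_iff (a : nat -> R) n k t : (1 <= k)%nat ->
  (exists v, is_kmin a n k v /\ v <= t) <-> (k <= cle a n t)%nat.
Proof.
  intros Hk. split.
  - intros [v [[_ [_ H]] Hv]]. eapply Nat.le_trans; [apply H|].
    apply count_mono. intros i _. destruct (Rle_dec (a i) v), (Rle_dec (a i) t); auto; lra.
  - intros H.
    set (M := filter (fun i => if Rle_dec (a i) t then true else false) (seq 0 n)).
    assert (HM : M <> nil) by (apply count_pos; unfold cle in H; lia).
    destruct (list_max a M HM) as [im [Him Hmx]].
    set (L := filter (fun i => (Nat.leb k (cle a n (a i)) &&
                     if Rle_dec (a i) t then true else false)%bool) (seq 0 n)).
    assert (HimM := Him). unfold M in Him; apply filter_In in Him; destruct Him as [Hims Himt].
    assert (HL : In im L).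
    { unfold L; apply filter_In; split; auto. rewrite Himt, Bool.andb_true_r.
      apply Nat.leb_le. eapply Nat.le_trans; [apply H|]. apply count_mono.
      intros i Hi Ht. destruct (Rle_dec (a i) (a im)); auto. exfalso; apply n0.
      apply Hmx. unfold M; apply filter_In; split; auto. apply in_seq; lia. }
    assert (HL' : L <> nil) by (intros E; rewrite E in HL; destruct HL).
    destruct (list_min a L HL') as [iv [Hiv Hmn]].
    assert (Hiv' := Hiv). unfold L in Hiv'; apply filter_In in Hiv'.
    destruct Hiv' as [Hivs Hivc]. apply Bool.andb_true_iff in Hivc. destruct Hivc as [Hk1 Hk2].
    apply Nat.leb_le in Hk1. apply in_seq in Hivs.
    exists (a iv). split.
    2:{ destruct (Rle_dec (a iv) t); [auto|discriminate]. }
    split; [exists iv; split; [lia|auto]|]. split; [|exact Hk1].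
    destruct (Nat.lt_ge_cases (count_idx n (fun i => if Rlt_dec (a i) (a iv) then true else false)) k)
      as [Hlt|Hge]; auto. exfalso.
    assert (HM2 : filter (fun i => if Rlt_dec (a i) (a iv) then true else false) (seq 0 n) <> nil)
      by (apply count_pos; lia).
    destruct (list_max a _ HM2) as [jm [Hjm Hjmx]].
    assert (Hjm' := Hjm). apply filter_In in Hjm'. destruct Hjm' as [Hjs Hjc].
    destruct (Rlt_dec (a jm) (a iv)) as [Hjlt|]; [|discriminate].
    assert (In jm L).
    { unfold L; apply filter_In; split; auto. apply Bool.andb_true_iff; split.
      - apply Nat.leb_le. eapply Nat.le_trans; [apply Hge|]. apply count_mono.
        intros i Hi Ht. destruct (Rlt_dec (a i) (a iv)); [|discriminate].
        destruct (Rle_dec (a i) (a jm)); auto. exfalso; apply n0.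
        apply Hjmx, filter_In; split. apply in_seq; lia.
        destruct (Rlt_dec (a i) (a iv)); auto.
      - destruct (Rle_dec (a iv) t); [|discriminate]. destruct (Rle_dec (a jm) t); auto; lra. }
    specialize (Hmn jm H0). lra.
Qed.

Lemma exp_le_mono x y : x <= y -> exp x <= exp y.
Proof. intros H; destruct (Rle_lt_or_eq_dec _ _ H) as [h|<-]. left; apply exp_increasing; auto. lra. Qed.

Lemma exp_convex a x : 0 <= a <= 1 -> exp (a * x) <= 1 - a + a * exp x.
Proof.
  intros Ha.
  pose proof (exp_ineq1_le (- (a * x))) as H1.
  pose proof (exp_ineq1_le (x - a * x)) as H2.
  set (E := exp (a * x)).
  assert (HE : 0 < E) by apply exp_pos.
  assert (e1 : exp (- (a * x)) * E = 1) by (unfold E; rewrite <- exp_plus; replace (- (a * x) + a * x) with 0 by ring; apply exp_0).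
  assert (e2 : exp x = E * exp (x - a * x)) by (unfold E; rewrite <- exp_plus; f_equal; ring).
  assert (G1 : E * (1 + - (a * x)) <= 1) by (rewrite <- e1; rewrite Rmult_comm; apply Rmult_le_compat_r; lra).
  assert (G2 : E * (1 + (x - a * x)) <= exp x) by (rewrite e2; apply Rmult_le_compat_l; lra).
  assert (G : (1 - a) * (E * (1 + - (a * x))) + a * (E * (1 + (x - a * x))) <= (1 - a) * 1 + a * exp x).
  { apply Rplus_le_compat; apply Rmult_le_compat_l; lra. }
  replace ((1 - a) * (E * (1 + - (a * x))) + a * (E * (1 + (x - a * x)))) with E in G by ring. lra.
Qed.

Lemma factor_bound p a L : 0 <= p <= 1 -> 0 <= a <= 1 -> 0 <= L ->
  (a = 1 \/ (p <> 1 /\ a / (1 - a) >= exp L * (p / (1 - p)))) ->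
  1 - p + exp L * p <= exp (a * L).
Proof.
  intros Hp Ha HL H.
  set (lam := exp L) in *.
  assert (Hlam : 1 <= lam) by (unfold lam; rewrite <- exp_0; apply exp_le_mono; auto).
  destruct (Req_dec a 1) as [->|Ha1].
  { rewrite Rmult_1_l. fold lam. nra. }
  destruct H as [H|[Hp1 H]]; [contradiction|].
  assert (Ha' : 0 < 1 - a) by lra. assert (Hp' : 0 < 1 - p) by lra.
  assert (H' : lam * p * (1 - a) <= a * (1 - p)).
  { apply Rge_le in H. apply (Rmult_le_compat_r ((1 - a) * (1 - p))) in H; [|nra].
    replace (a / (1 - a) * ((1 - a) * (1 - p))) with (a * (1 - p)) in H by (field; lra).
    replace (lam * (p / (1 - p)) * ((1 - a) * (1 - p))) with (lam * p * (1 - a)) in H by (field; lra).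
    exact H. }
  set (c := exp (- L)).
  assert (Hc : lam * c = 1) by (unfold lam, c; rewrite <- exp_plus; replace (L + - L) with 0 by ring; apply exp_0).
  assert (Hc0 : 0 < c) by apply exp_pos.
  pose proof (exp_convex a (- L) Ha) as Hcv. fold c in Hcv.
  assert (Hpc : p * (1 - a + a * c) <= a * c).
  { apply (Rmult_le_compat_r c) in H'; [|lra].
    replace (lam * p * (1 - a) * c) with (p * (1 - a) * (lam * c)) in H' by ring. rewrite Hc in H'. nra. }
  assert (Hprod : (1 - p + lam * p) * (1 - a + a * c) <= 1).
  { replace ((1 - p + lam * p) * (1 - a + a * c)) with
      ((1 - a + a * c) + (lam - 1) * (p * (1 - a + a * c))) by ring.
    assert ((lam - 1) * (p * (1 - a + a * c)) <= (lam - 1) * (a * c)) by (apply Rmult_le_compat_l; lra).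
    replace ((lam - 1) * (a * c)) with (a * (lam * c) - a * c) in H0 by ring. rewrite Hc in H0. lra. }
  assert (Hea : exp (a * L) * exp (a * - L) = 1).
  { rewrite <- exp_plus. replace (a * L + a * - L) with 0 by ring. apply exp_0. }
  assert (0 < exp (a * L)) by apply exp_pos.
  assert (0 < exp (a * - L)) by apply exp_pos.
  assert (1 - p + lam * p >= 0) by nra.
  assert (H4 : (1 - p + lam * p) * exp (a * - L) <= 1).
  { eapply Rle_trans; [|apply Hprod]. apply Rmult_le_compat_l; lra. }
  apply (Rmult_le_compat_r (exp (a * L))) in H4; [|lra].
  rewrite Rmult_assoc, (Rmult_comm (exp (a * - L))), Hea in H4. lra.
Qed.

Lemma odds_iter (F : R -> R) K : 0 < K -> condC F K ->
  forall j t, 0 < t -> F (K ^ j * t) = 1 \/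
    (F t <> 1 /\ F (K ^ j * t) / (1 - F (K ^ j * t)) >= 2 ^ j * (F t / (1 - F t))).
Proof.
  intros HK HC. induction j; intros t Ht.
  - simpl. rewrite Rmult_1_l. destruct (Req_dec (F t) 1); [left; auto | right; split; auto; lra].
  - assert (Ht' : 0 < K ^ j * t) by (apply Rmult_lt_0_compat; auto; apply pow_lt; auto).
    destruct (HC _ Ht') as [H|[H1 H2]].
    + left. simpl. rewrite Rmult_assoc. auto.
    + destruct (IHj t Ht) as [H3|[H3 H4]]; [contradiction|].
      right; split; auto. simpl pow. rewrite Rmult_assoc.
      replace (2 * F (K ^ j * t) / (1 - F (K ^ j * t))) with
        (2 * (F (K ^ j * t) / (1 - F (K ^ j * t)))) in H2 by (unfold Rdiv; ring).
      replace (2 * 2 ^ j * (F t / (1 - F t))) with (2 * (2 ^ j * (F t / (1 - F t)))) by ring.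
      lra.
Qed.

Lemma fold_plus_init x l : fold_right Rplus x l = fold_right Rplus 0 l + x.
Proof. induction l; simpl. ring. rewrite IHl; ring. Qed.

Lemma rsum_S m f : rsum (S m) f = rsum m f + f m.
Proof. unfold rsum. rewrite seq_S, map_app, fold_right_app. simpl. rewrite fold_plus_init. ring. Qed.

Lemma Pim_exp (f a : nat -> R) L m :
  (forall i, (i < m)%nat -> 0 <= f i <= exp (a i * L)) -> Pim f m <= exp (L * rsum m a).
Proof.
  induction m; intros H; simpl.
  - unfold rsum; simpl. rewrite Rmult_0_r, exp_0; lra.
  - rewrite rsum_S. replace (L * (rsum m a + a m)) with (L * rsum m a + a m * L) by ring.
    rewrite exp_plus.
    assert (0 <= Pim f m).
    { clear IHm. induction m; simpl. lra. apply Rmult_le_pos. apply IHm; intros; apply H; lia.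
      apply H; lia. }
    apply Rmult_le_compat; [auto| apply H; lia | apply IHm; intros; apply H; lia | apply H; lia].
Qed.

Lemma pow_exp L k : exp L ^ k = exp (INR k * L).
Proof. induction k. simpl; rewrite Rmult_0_l, exp_0; auto. rewrite S_INR; simpl pow; rewrite IHk.
  replace ((INR k + 1) * L) with (L + INR k * L) by ring. rewrite exp_plus; auto. Qed.

Theorem mainTheorem2 (Om : prob_space) (K : R) (n k : nat)
  (X : nat -> Om -> R) (q : R) (l : nat) :
  1 < K ->
  (1 <= k)%nat -> (k <= n)%nat ->
  (forall i, (i < n)%nat -> random_variable Om (X i)) ->
  (forall i w, (i < n)%nat -> 0 <= X i w) ->
  independent Om n X ->
  (forall i, (i < n)%nat -> condC (cdf Om (X i)) K) ->
  0 < q ->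
  rsum n (fun i => cdf Om (X i) q) <= INR k - 1 / 2 ->
  (5 <= l)%nat ->
  Pr Om (fun w => exists v, is_kmin (fun i => X i w) n k v /\ v <= q / K ^ l)
    <= 4 / Rpower 2 (INR l / 2).
Proof.
  intros HK Hk1 Hkn HX Hnn Hind HC Hq Hsum Hl.
  set (t := q / K ^ l).
  set (L := INR l * ln 2).
  assert (Hln2 : 0 < ln 2) by (rewrite <- ln_1; apply ln_increasing; lra).
  assert (HL : 0 <= L) by (unfold L; apply Rmult_le_pos; [apply pos_INR|lra]).
  set (lam := exp L).
  assert (Hlam : 1 <= lam) by (unfold lam; rewrite <- exp_0; apply exp_le_mono; auto).
  assert (Hlam2 : lam = 2 ^ l) by (unfold lam, L; rewrite <- Rpower_pow by lra; reflexivity).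
  assert (HKl : 0 < K ^ l) by (apply pow_lt; lra).
  assert (Ht : 0 < t) by (unfold t; apply Rdiv_lt_0_compat; auto).
  rewrite (Pr_ext Om _ (fun w => cyl Om X t nil nil w /\ (k <= cnt Om X t n w)%nat)).
  2:{ intros w. rewrite (kmin_iff (fun i => X i w) n k t Hk1). unfold cle. rewrite cnt_count.
      unfold cyl; simpl; split; [intros; split; [split; intros _ []|]; auto| tauto]. }
  pose proof (main_bound Om n X t lam HX Hind Hlam n (le_n _) k nil nil (NoDup_nil _)
                (fun i (Hi : In i nil) => match Hi with end)) as HB.
  set (f := fun i => 1 - cdf Om (X i) t + lam * cdf Om (X i) t) in HB.
  assert (Hcyl : 0 <= Pr Om (cyl Om X t nil nil) <= 1).
  { split; [apply Pr_nonneg| apply Pr_le1]; apply (meas_cyl Om n); auto; intros i []. }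
  assert (Hp : forall i x, (i < n)%nat -> 0 <= cdf Om (X i) x <= 1).
  { intros i x Hi; unfold cdf; split; [apply Pr_nonneg| apply Pr_le1]; apply HX; auto. }
  assert (HPim : Pim f n <= exp (L * rsum n (fun i => cdf Om (X i) q))).
  { apply Pim_exp. intros i Hi. split.
    - unfold f; specialize (Hp i t Hi); nra.
    - unfold f. apply factor_bound; auto.
      destruct (odds_iter (cdf Om (X i)) K ltac:(lra) (HC i Hi) l t Ht) as [H|[H1 H2]].
      + left. replace q with (K ^ l * t) by (unfold t; field; lra). exact H.
      + right; split; auto. replace q with (K ^ l * t) by (unfold t; field; lra).
        fold lam; rewrite Hlam2; exact H2. }
  assert (HPim0 : 1 <= Pim f n).
  { apply Pim_ge1. intros i Hi. unfold f; specialize (Hp i t Hi); nra. }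
  assert (Hlk : lam ^ k = exp (INR k * L)) by (unfold lam; apply pow_exp).
  rewrite Hlk in HB.
  assert (Hek : 0 < exp (INR k * L)) by apply exp_pos.
  eapply Rle_trans; [exact HB|].
  assert (S1 : Pr Om (cyl Om X t nil nil) * Pim f n / exp (INR k * L) <= exp (L * rsum n (fun i => cdf Om (X i) q)) / exp (INR k * L)).
  { unfold Rdiv. apply Rmult_le_compat_r. left; apply Rinv_0_lt_compat; auto. nra. }
  eapply Rle_trans; [exact S1|].
  assert (S2 : exp (L * rsum n (fun i => cdf Om (X i) q)) <= exp (L * (INR k - 1/2))).
  { apply exp_le_mono. apply Rmult_le_compat_l; auto. }
  assert (S3 : exp (L * (INR k - 1/2)) / exp (INR k * L) = / exp (L / 2)).
  { rewrite <- exp_Ropp. replace (- (L / 2)) with (L * (INR k - 1/2) + - (INR k * L)) by field.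
    rewrite exp_plus, exp_Ropp. reflexivity. }
  assert (S4 : Rpower 2 (INR l / 2) = exp (L / 2)).
  { unfold Rpower, L. f_equal. field. }
  rewrite S4.
  assert (0 < exp (L / 2)) by apply exp_pos.
  apply (Rmult_le_compat_r (/ exp (INR k * L))) in S2; [|left; apply Rinv_0_lt_compat; auto].
  fold (Rdiv (exp (L * rsum n (fun i : nat => cdf Om (X i) q))) (exp (INR k * L))) in S2.
  fold (Rdiv (exp (L * (INR k - 1 / 2))) (exp (INR k * L))) in S2.
  rewrite S3 in S2.
  eapply Rle_trans; [exact S2|].
  unfold Rdiv. assert (0 < / exp (L / 2)) by (apply Rinv_0_lt_compat; auto). lra.
Qed.
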